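(* Let $(S,d)$ be a metric space, let $\mu$ be a finite signed Borel measure on $S$ that is separable (i.e. there is a separable $S_0\subset S$ with $|\mu|(S_0)=|\mu|(S)$), and let $\bullet\in\{\mathrm{FM},\mathrm{BL}\}$. Then there exists $f^\bullet_\mu\in\operatorname{ext}(B^S_\bullet)$ such that $\|\mu\|^*_\bullet=\int_S f^\bullet_\mu\,d\mu$.
   Context: $\mathrm{BL}(S)$ is the space of bounded real-valued Lipschitz functions on $S$, $|f|_L=\sup_{x\neq y}|f(x)-f(y)|/d(x,y)$, $\|f\|_{\mathrm{BL}}=\|f\|_\infty+|f|_L$, $\|f\|_{\mathrm{FM}}=\max(\|f\|_\infty,|f|_L)$, $B^S_\bullet=\{f\in\mathrm{BL}(S):\|f\|_\bullet\le1\}$, $\operatorname{ext}$ denotes the set of extreme points, $|\mu|$ is the total variation of $\mu$, and $\|\mu\|^*_\bullet=\sup_{f\in B^S_\bullet}\int_S f\,d\mu$. *)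

(* Defs.v *)
From HB Require Import structures.
From mathcomp Require Import all_boot all_order all_algebra.
From mathcomp Require Import all_classical all_reals all_analysis.
Set Implicit Arguments. Unset Strict Implicit. Unset Printing Implicit Defensive.
Import Order.TTheory GRing.Theory Num.Theory.
Import numFieldNormedType.Exports.
Local Open Scope classical_set_scope.
Local Open Scope ring_scope.

(* nonempty metric spaces: measurable-space structures in MathComp-Analysis
   require a pointed carrier *)
#[short(type="pmetricType")]
HB.structure Definition PointedMetric (K : numDomainType) :=
  { M of Metric K M & isPointed M }.

Section defs.
Context {R : realType} {S : pmetricType R}.

Local Notation borel_of := (g_sigma_algebraType (@open S)).

Inductive norm_kind := FM | BL.

Local Open Scope ereal_scope.

(* ||f||_oo (with the convention sup of an empty set of nonnegatives = 0) *)
Definition sup_norm (f : S -> R) : \bar R :=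
  ereal_sup ([set 0] `|` [set (`|f x|)%:E | x in [set: S]]).

Definition lip_seminorm (f : S -> R) : \bar R :=
  ereal_sup ([set 0] `|`
    [set z | exists x y : S, x != y /\ z = (`|f x - f y| / mdist x y)%:E]).

Definition bnorm (k : norm_kind) (f : S -> R) : \bar R :=
  match k with
  | FM => maxe (sup_norm f) (lip_seminorm f)
  | BL => sup_norm f + lip_seminorm f
  end.

(* B^S_k : closed unit ball of BL(S) for the norm k (finite norm forces
   f to be bounded and Lipschitz) *)
Definition unit_ball (k : norm_kind) : set (S -> R) :=
  [set f | bnorm k f <= 1].

Local Close Scope ereal_scope.

Definition extreme_point (B : set (S -> R)) (f : S -> R) : Prop :=
  B f /\ forall (g h : S -> R) (t : R), B g -> B h -> 0 < t < 1 ->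
    f = (fun x => t * g x + (1 - t) * h x) -> g = f /\ h = f.

Local Open Scope ereal_scope.

Context {nu : {charge set borel_of -> \bar R}} {P N : set borel_of}.
Variable (nuPN : hahn_decomposition nu P N).

Definition signed_integral (f : S -> R) : \bar R :=
  \int[jordan_pos nuPN]_x (f x)%:E - \int[jordan_neg nuPN]_x (f x)%:E.

Definition total_variation : set borel_of -> \bar R := charge_variation nuPN.

Definition dual_norm (k : norm_kind) : \bar R :=
  ereal_sup [set signed_integral f | f in unit_ball k].

Definition separable_subset (S0 : set S) : Prop :=
  exists D : set S, countable D /\ D `<=` S0 /\ S0 `<=` closure D.

Definition separable_charge : Prop :=
  exists S0 : set borel_of, measurable S0 /\ separable_subset S0 /\
    total_variation S0 = total_variation [set: borel_of].

End defs.

Notation borel_of S := (g_sigma_algebraType (@open S)).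

(* Main.v *)
Require Import Defs.
From HB Require Import structures.
From mathcomp Require Import all_boot all_order all_algebra.
From mathcomp Require Import all_classical all_reals all_analysis.
From mathcomp Require Import lra ring measurable_realfun.
Import Order.TTheory GRing.Theory Num.Theory.
Import numFieldNormedType.Exports.
Local Open Scope classical_set_scope.
Local Open Scope ring_scope.

Module P1.
Set Implicit Arguments. Unset Strict Implicit. Unset Printing Implicit Defensive.

Section part1.
Variables (R : realType).

Local Open Scope ereal_scope.
Lemma sup_sum_le (A B : set \bar R) : A 0 -> B 0 ->
  (forall u, A u -> u \is a fin_num) -> (forall v, B v -> v \is a fin_num) ->
  (ereal_sup A + ereal_sup B <= 1 <-> forall u v, A u -> B v -> u + v <= 1).
Proof.
move=> A0 B0 Af Bf; split.
  move=> h u v Au Bv; apply: le_trans h.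
  by apply: leeD; apply: ereal_sup_ubound.
move=> h.
have sA : forall v, B v -> ereal_sup A <= 1 - v.
  move=> v Bv; apply: ge_ereal_sup => u Au.
  by rewrite leeBrDr ?Bf //; apply: h.
have a0 : 0 <= ereal_sup A by apply: ereal_sup_ubound.
have a1 : ereal_sup A <= 1 by have := sA 0 B0; rewrite sube0.
have af : ereal_sup A \is a fin_num.
  by rewrite fin_numE; apply/andP; split; apply/eqP => e; move: a0 a1; rewrite e.
have : ereal_sup B <= 1 - ereal_sup A.
  apply: ge_ereal_sup => v Bv; rewrite leeBrDl //.
  by rewrite -leeBrDr ?Bf //; apply: sA.
by rewrite leeBrDl.
Qed.
Local Close Scope ereal_scope.

Variable (S : pmetricType R).

Definition lratio (f : S -> R) (x y : S) : R := `|f x - f y| / mdist x y.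

Definition Q (k : norm_kind) (f : S -> R) : Prop :=
  match k with
  | FM => (forall x, `|f x| <= 1) /\ (forall x y, x != y -> lratio f x y <= 1)
  | BL => (forall x, `|f x| <= 1) /\ (forall x y, x != y -> lratio f x y <= 1) /\
          (forall x y z, y != z -> `|f x| + lratio f y z <= 1)
  end.

Lemma supnorm_set_fin (f : S -> R) u :
  ([set 0] `|` [set (`|f x|)%:E | x in [set: S]]) u -> u \is a fin_num.
Proof. by case=> [->|[x _ <-]]. Qed.

Lemma lip_set_fin (f : S -> R) u :
  ([set 0] `|` [set z | exists x y : S, x != y /\ z = (`|f x - f y| / mdist x y)%:E]) u ->
  u \is a fin_num.
Proof. by case=> [->|[x [y [_ ->]]]]. Qed.

Lemma sup_norm_le1 (f : S -> R) :
  (sup_norm f <= 1)%E <-> forall x, `|f x| <= 1.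
Proof.
split.
  move=> h x; rewrite -lee_fin; apply: le_trans h.
  by apply: ereal_sup_ubound; right; exists x.
move=> h; apply: ge_ereal_sup => u [->|[x _ <-]]; first by rewrite lee01.
by rewrite lee_fin.
Qed.

Lemma lip_le1 (f : S -> R) :
  (lip_seminorm f <= 1)%E <-> forall x y, x != y -> lratio f x y <= 1.
Proof.
split.
  move=> h x y xy; rewrite -lee_fin; apply: le_trans h.
  by apply: ereal_sup_ubound; right; exists x, y.
move=> h; apply: ge_ereal_sup => u [->|[x [y [xy ->]]]]; first by rewrite lee01.
by rewrite lee_fin; apply: h.
Qed.

Lemma unit_ballP k (f : S -> R) : unit_ball k f <-> Q k f.
Proof.
rewrite /unit_ball /bnorm /=; case: k => /=.
  rewrite ge_max; split.
    by case/andP => /sup_norm_le1 h1 /lip_le1 h2.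
  by case=> /sup_norm_le1 h1 /lip_le1 h2; rewrite h1 h2.
rewrite /sup_norm /lip_seminorm sup_sum_le; first last.
- exact: lip_set_fin.
- exact: supnorm_set_fin.
- by left.
- by left.
split.
  move=> h; split; [|split].
  - by move=> x; have := h _ _ (or_intror (ex_intro2 _ _ x I erefl)) (or_introl erefl);
      rewrite adde0 lee_fin.
  - move=> x y xy; have := h _ _ (or_introl erefl)
      (or_intror (ex_intro _ x (ex_intro _ y (conj xy erefl)))).
    by rewrite add0e lee_fin.
  - move=> x y z yz; have := h _ _ (or_intror (ex_intro2 _ _ x I erefl))
      (or_intror (ex_intro _ y (ex_intro _ z (conj yz erefl)))).
    by rewrite lee_fin.
case=> h1 [h2 h3] u v [->|[x _ <-]] [->|[y [z [yz ->]]]].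
- by rewrite adde0 lee01.
- by rewrite add0e lee_fin; apply: h2.
- by rewrite adde0 lee_fin.
- by rewrite lee_fin; apply: h3.
Qed.

Lemma Q_bound {k f} : Q k f -> forall x, `|f x| <= 1.
Proof. by case: k => /= [[]|[]]. Qed.

Lemma Q_ratio {k f} : Q k f -> forall x y, x != y -> lratio f x y <= 1.
Proof. by case: k => /= [[]|[? []]]. Qed.

Lemma Q_lip {k f} : Q k f -> forall x y, `|f x - f y| <= mdist x y.
Proof.
move=> h x y; have [->|xy] := eqVneq x y; first by rewrite subrr normr0 mdist_ge0.
have := Q_ratio h xy; rewrite /lratio ler_pdivrMr ?mul1r //.
by rewrite mdist_gt0.
Qed.

End part1.

End P1.
Import P1.

Module P1b.

Section part1b.
Variables (R : realType) (S : pmetricType R).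
Variables (F : set_system (S -> R)) (PF : ProperFilter F).
Existing Instance PF.

Lemma lim_le1 (E : (S -> R) -> R) l :
  E @ F --> l -> (\forall g \near F, E g <= 1) -> l <= 1.
Proof.
move=> El h.
exact: (@closed_cvg _ _ F PF E (fun r : R => r <= 1) (@closed_le R 1) h l El).
Qed.

Variable f : S -> R.
Hypothesis Ff : forall x, (fun g : S -> R => g x) @ F --> f x.

Lemma cvg_absf x : (fun g : S -> R => `|g x|) @ F --> `|f x|.
Proof. exact: (@cvg_norm R R^o _ F _ (fun g => g x) (f x) (Ff x)). Qed.

Lemma cvg_ratio (x y : S) : (fun g : S -> R => lratio g x y) @ F --> lratio f x y.
Proof.
rewrite /lratio; apply: cvgMl; apply: cvg_norm; apply: cvgB; exact: Ff.
Qed.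

Lemma Q_closed k : F (Q k) -> Q k f.
Proof.
move=> FQ; case: k FQ => /= FQ.
  split.
    move=> x; apply: (lim_le1 _ _ (cvg_absf x)).
    by apply: filterS FQ => g [h _].
  move=> x y xy; apply: (lim_le1 _ _ (cvg_ratio x y)).
  by apply: filterS FQ => g [_ h]; apply: h.
split; [|split].
- move=> x; apply: (lim_le1 _ _ (cvg_absf x)).
  by apply: filterS FQ => g [h _].
- move=> x y xy; apply: (lim_le1 _ _ (cvg_ratio x y)).
  by apply: filterS FQ => g [_ [h _]]; apply: h.
- move=> x y z yz; apply: (lim_le1 _ _ (cvgD (cvg_absf x) (cvg_ratio y z))).
  by apply: filterS FQ => g [_ [_ h]]; apply: h.
Qed.

End part1b.

End P1b.
Import P1b.

Module P2.

Section part2.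
Variables (R : realType) (S : pmetricType R).

Lemma exists_limit k (F : set_system (S -> R)) (PF : ProperFilter F) :
  F (Q k) -> exists (G : set_system (S -> R)) (f : S -> R),
    [/\ ProperFilter G, F `<=` G, Q k f &
        forall x, (fun g : S -> R => g x) @ G --> f x].
Proof.
move=> FQ.
pose Box : set (prod_topology (fun _ : S => R)) :=
  [set f | forall x : S, (`[-1, 1]%classic : set R) (f x)].
have cBox : compact Box.
  by apply: (@tychonoff S (fun _ => R) (fun _ => `[-1, 1]%classic)) => x;
    exact: segment_compact.
have FBox : F Box.
  apply: filterS FQ => g Qg x /=; have := Q_bound Qg x.
  by rewrite in_itv /= -ler_norml.
have [p [Bp]] := cBox F PF FBox.
rewrite (@cluster_cvgE (prod_topology (fun _ : S => R)) F PF) /= => -[G PG [Gp FG]].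
have Gx : forall x, (fun g : S -> R => g x) @ G --> p x.
  by apply/(@pointwise_cvgP S R G p PG).
exists G, p; split => //.
exact: (@Q_closed R S G PG p Gx k (FG _ FQ)).
Qed.

End part2.

End P2.
Import P2.

Module P3.

Section part3.
Variables (R : realType) (S : pmetricType R) (k : norm_kind).

Definition uclosed (G : set (S -> R)) := forall (H : set_system (S -> R)),
  ProperFilter H -> H G ->
  forall f, (forall x, (fun g : S -> R => g x) @ H --> f x) -> G f.
Definition face (G : set (S -> R)) := forall (g h : S -> R) (t : R),
  Q k g -> Q k h -> 0 < t < 1 ->
  G (fun x => t * g x + (1 - t) * h x) -> G g /\ G h.
Definition good G := [/\ G `<=` Q k, G !=set0, uclosed G & face G].
Definition usc (phi : (S -> R) -> R) := forall (H : set_system (S -> R)),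
  ProperFilter H -> H (Q k) ->
  forall p, (forall x, (fun g : S -> R => g x) @ H --> p x) ->
  forall c, (\forall g \near H, c <= phi g) -> c <= phi p.
Definition affine (phi : (S -> R) -> R) := forall g h (t : R),
  Q k g -> Q k h -> 0 < t < 1 ->
  phi (fun x => t * g x + (1 - t) * h x) = t * phi g + (1 - t) * phi h.
Definition argmax (G : set (S -> R)) (phi : (S -> R) -> R) :=
  [set f | G f /\ forall g, G g -> phi g <= phi f].

Lemma argmax_good G phi : good G -> usc phi -> affine phi ->
  (exists M, forall f, G f -> phi f <= M) -> good (argmax G phi).
Proof.
move=> [GB [f0 Gf0] Gu Gface] uphi aphi [M hM].
have HG : forall H : set_system (S -> R), Filter H -> H G -> H (Q k).
  by move=> H FH HG; apply: filterS HG.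
split.
- by move=> f [Gf _]; apply: GB.
- pose E := [set phi f | f in G].
  have hs : has_sup E.
    by split; [exists (phi f0), f0 | exists M => _ [f Gf <-]; apply: hM].
  pose m := sup E.
  pose D := [set e : R | 0 < e].
  pose Bf := fun e : R => [set f | G f /\ m - e < phi f].
  have FF : Filter (filter_from D Bf).
    apply: filter_from_filter; first by exists 1; rewrite /D /= ltr01.
    move=> i j Di Dj; exists (Num.min i j); first by rewrite /D /= lt_min Di Dj.
    move=> f [Gf hf]; split; split => //; apply: le_lt_trans hf;
      rewrite lerD2l lerN2 ge_min lexx ?orbT //.
  have PF : ProperFilter (filter_from D Bf).
    apply: filter_from_proper => e De.
    have [_ [f Gf <-] he] := sup_adherent De hs.
    by exists f.
  have HGf : filter_from D Bf G by exists 1; [rewrite /D /= ltr01 | move=> f []].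
  have [H [p [PH sub Qp Hp]]] := @exists_limit R S k _ PF (HG _ FF HGf).
  have Gp : G p := Gu H PH (sub _ HGf) p Hp.
  exists p; split => // g Gg.
  have : m <= phi p.
    apply/ler_addgt0Pr => e e0; rewrite -lerBlDr.
    apply: (uphi H PH (sub _ (HG _ FF HGf)) p Hp).
    by apply: sub; exists e => // f [_ /ltW].
  by apply: le_trans; apply: sup_upper_bound => //; exists g.
- move=> H PH HA p Hp.
  have HG' : H G by apply: filterS HA => f [].
  have Gp := Gu H PH HG' p Hp.
  split => // g Gg.
  apply: (uphi H PH (HG _ PH HG') p Hp).
  by apply: filterS HA => f [_ hf]; apply: hf.
- move=> g h t Qg Qh t01 [Gc hc].
  have [Gg Gh] := Gface g h t Qg Qh t01 Gc.
  have le1 := hc g Gg; have le2 := hc h Gh.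
  rewrite aphi // in le1 le2.
  have /andP[t0 t1] := t01.
  have eg : t * phi g + (1 - t) * phi h <= phi g by nra.
  have eh : t * phi g + (1 - t) * phi h <= phi h by nra.
  split; split => // u Gu'; apply: le_trans (hc u Gu') _; rewrite aphi //.
Qed.

Lemma usc_eval x : usc (fun f => f x).
Proof.
move=> H PH HQ p Hp c Hc.
exact: (@closed_cvg _ _ H PH (fun g : S -> R => g x) (fun r : R => c <= r)
  (@closed_ge R c) Hc (p x) (Hp x)).
Qed.

Lemma affine_eval x : affine (fun f => f x).
Proof. by []. Qed.

Lemma extreme_exists G0 : good G0 ->
  exists f, G0 f /\ extreme_point (unit_ball k) f.
Proof.
move=> gG0.
pose T := {G : set (S -> R) | good G /\ G `<=` G0}.
have sig_eq : forall s t : T, proj1_sig s = proj1_sig t -> s = t.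
  move=> [A pA] [B pB] /= AB; subst B.
  by congr exist; apply: Prop_irrelevance.
pose Rel := fun A B : T => `[< proj1_sig B `<=` proj1_sig A >].
have [t tmin] : exists t, forall s, Rel t s -> s = t.
  apply: (@Zorn T Rel).
  - by move=> t; apply/asboolP.
  - move=> r s t /asboolP rs /asboolP st; apply/asboolP.
    exact: subset_trans st rs.
  - move=> s t /asboolP st /asboolP ts; apply: sig_eq.
    by apply/seteqP; split.
  - move=> A Atot.
    have [[s0 As0]|A0] := pselect (A !=set0); last first.
      exists (exist _ G0 (conj gG0 (@subset_refl _ G0))) => s As.
      by exfalso; apply: A0; exists s.
    pose I := \bigcap_(s in A) proj1_sig s.
    have IG : forall s, A s -> I `<=` proj1_sig s by move=> s As f If; apply: If.
    have gI : good I /\ I `<=` G0.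
      have [[gs0B gs0n gs0u gs0f] gs0G] := proj2_sig s0.
      split; last by apply: subset_trans (IG _ As0) gs0G.
      split.
      + by apply: subset_trans (IG _ As0) gs0B.
      + pose FF := filter_from A (fun s : T => proj1_sig s).
        have FiF : Filter FF.
          apply: filter_from_filter; first by exists s0.
          move=> i j Ai Aj; have [/asboolP ij|/asboolP ji] := Atot i j Ai Aj.
            by exists j => // f fj; split => //; apply: ij.
          by exists i => // f fi; split => //; apply: ji.
        have PFF : ProperFilter FF.
          apply: filter_from_proper => s As.
          by have [[_ ? _ _] _] := proj2_sig s.
        have FQ : FF (Q k) by exists s0.
        have [H [p [PH sub Qp Hp]]] := @exists_limit R S k _ PFF FQ.
        exists p => s As.
        have [[_ _ us _] _] := proj2_sig s.
        apply: (us H PH _ p Hp).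
        by apply: sub; exists s.
      + move=> H PH HI p Hp s As.
        have [[_ _ us _] _] := proj2_sig s.
        apply: (us H PH _ p Hp).
        by apply: filterS HI; apply: IG.
      + move=> g h t' Qg Qh t01 Ic; split => s As;
          have [[_ _ _ fs] _] := proj2_sig s;
          have [] := fs g h t' Qg Qh t01 (Ic s As) => //.
    exists (exist _ I gI) => s As; apply/asboolP; exact: IG.
have [[Gb Gn Gu Gf] GG0] := proj2_sig t.
set G := proj1_sig t in Gb Gn Gu Gf GG0.
have [f0 Gf0] := Gn.
have single : forall g, G g -> g = f0.
  move=> g Gg; apply/funext => x; apply/eqP/negPn/negP => gx.
  have gA : good (argmax G (fun f => f x)).
    apply: argmax_good => //; first exact: usc_eval.
    exists 1 => f Gf'; have := Q_bound (Gb _ Gf') x.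
    by apply: le_trans; apply: ler_norm.
  have AG0 : argmax G (fun f => f x) `<=` G0.
    by move=> f [Gf' _]; apply: GG0.
  have := tmin (exist _ _ (conj gA AG0)).
  have -> : Rel t (exist _ _ (conj gA AG0)).
    by apply/asboolP => f [].
  move=> /(_ isT) /(congr1 (@proj1_sig _ _)) /= AG.
  have : argmax G (fun f => f x) g by rewrite AG.
  have : argmax G (fun f => f x) f0 by rewrite AG.
  move=> [_ h1] [_ h2].
  have := h1 g Gg; have := h2 f0 Gf0 => le1 le2.
  by move: gx; rewrite eq_le le1 le2.
exists f0; split; first by apply: GG0.
split; first by apply/unit_ballP; apply: Gb.
move=> g h t' /unit_ballP Qg /unit_ballP Qh t01 e.
have Gc : G (fun x => t' * g x + (1 - t') * h x) by rewrite -e.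
have [Gg Gh] := Gf g h t' Qg Qh t01 Gc.
by split; apply: single.
Qed.

End part3.

End P3.
Import P3.

Module P4.

Section part4.
Variables (R : realType) (S : pmetricType R).

Lemma lip_meas (g : S -> R) : (forall x y, `|g x - g y| <= mdist x y) ->
  measurable_fun (setT : set (borel_of S)) g.
Proof.
move=> hg; apply: (measurability _ (measurable_realfun.RGenOpens.measurableE R)).
move=> _ [_ [a [b ->] <-]].
apply: sub_gen_smallest.
rewrite setTI openE => z /=; rewrite in_itv /= => /andP[az zb].
apply/nbhs_ballP; exists (Num.min (g z - a) (b - g z)) => /=.
  by rewrite lt_min !subr_gt0 az zb.
move=> w; rewrite ballEmdist /= lt_min => /andP[h1 h2].
have := hg z w; rewrite in_itv /=.
move=> /(le_lt_trans) => /(_ _ h1) h3.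
have := hg z w => /(le_lt_trans) => /(_ _ h2) h4.
move: h3 h4; rewrite !ltr_norml => /andP[h3 h3'] /andP[h4 h4'].
by apply/andP; split; lra.
Qed.

Lemma Q_meas k (f : S -> R) : Q k f -> measurable_fun (setT : set (borel_of S)) f.
Proof. by move=> Qf; apply: lip_meas; apply: Q_lip Qf. Qed.

Lemma mdist_meas (c : S) : measurable_fun (setT : set (borel_of S)) (mdist c).
Proof.
apply: lip_meas => x y.
have h1 := metric_triangle c x y; have h2 := metric_triangle c y x.
have s := metric_sym x y.
rewrite ler_norml; apply/andP; split; lra.
Qed.

End part4.

End P4.
Import P4.

Module P5.

Section part5.
Context d (T : measurableType d) (R : realType).
Variable (mu : {measure set T -> \bar R}).
Hypothesis muT : (mu setT < +oo)%E.

Lemma bnd_of (f : T -> R) (c : R) : (forall x, `|f x| <= c) ->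
  [bounded f x | x in setT].
Proof.
move=> h; exists c; split; first by rewrite num_real.
move=> M cM x _ /=; apply: le_trans (h x) _; exact: ltW.
Qed.

Lemma int_bd {f : T -> R} {c : R} : measurable_fun setT f ->
  (forall x, `|f x| <= c) -> mu.-integrable setT (EFin \o f).
Proof.
move=> mf hf; apply: measurable_bounded_integrable => //.
exact: bnd_of hf.
Qed.

Lemma int_fin {f : T -> R} {c : R} : measurable_fun setT f ->
  (forall x, `|f x| <= c) -> (\int[mu]_x (f x)%:E)%E \is a fin_num.
Proof.
move=> mf hf; apply: integrable_fin_num => //.
exact: int_bd hf.
Qed.

Lemma int_est (f g : T -> R) (U : set T) (c : R) : measurable U ->
  measurable_fun setT f -> measurable_fun setT g ->
  (forall x, `|f x| <= 1) -> (forall x, `|g x| <= 1) -> 0 <= c ->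
  (forall x, U x -> `|f x - g x| <= c) ->
  (\int[mu]_x (f x)%:E - \int[mu]_x (g x)%:E <=
    c%:E * mu setT + 2%:E * mu (~` U))%E.
Proof.
move=> mU mf mg hf hg c0 hU.
have intf := int_bd mf hf; have intg := int_bd mg hg.
rewrite -integralB_EFin //.
pose h := fun x => c + 2 * \1_(~` U) x.
have mh : measurable_fun setT h.
  apply: measurable_funD; first exact: measurable_cst.
  apply: measurable_funM; first exact: measurable_cst.
  by apply: (measurable_indic (measurableC mU)).
have inth : mu.-integrable setT (EFin \o h).
  apply: (int_bd (c := c + 2)) => // x; rewrite /h indicE.
  by case: (x \in ~` U); rewrite ?mulr1 ?mulr0 ?addr0 ger0_norm ?lerDl //;
    lra.
have hI : (\int[mu]_x (h x)%:E = c%:E * mu setT + 2%:E * mu (~` U))%E.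
  rewrite /h.
  under eq_integral do rewrite EFinD.
  rewrite integralD_EFin //; last first.
  - apply: (int_bd (c := 2)).
      apply: measurable_funM; first exact: measurable_cst.
      exact: (measurable_indic (measurableC mU)).
    by move=> x; rewrite indicE; case: (x \in ~` U); rewrite ?mulr1 ?mulr0 ?normr0 // ger0_norm.
  - by apply: (int_bd (c := `|c|)) => //; exact: measurable_cst.
  rewrite integral_cst //; congr (_ + _)%E.
  under eq_integral => x _ do rewrite /comp EFinM.
  rewrite integralZl //; last first.
    apply: (int_bd (c := 1)); first exact: (measurable_indic (measurableC mU)).
    by move=> x; rewrite indicE; case: (x \in ~` U); rewrite ?normr1 ?normr0.
  by rewrite integral_indic ?setIT //; exact: measurableC.
rewrite -hI; apply: le_integral => //.
- by apply: integrableB.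
- move=> x _; rewrite lee_fin /h indicE.
  have := hf x; have := hg x; rewrite !ler_norml => /andP[g1 g2] /andP[f1 f2].
  case: (boolP (x \in ~` U)) => [_|]; first by rewrite mulr1; lra.
  rewrite notin_setE /= => /contrapT Ux; rewrite mulr0 addr0.
  by apply: le_trans (hU x Ux); apply: ler_norm.
Qed.

Lemma int_lin (g h : T -> R) (t s : R) :
  measurable_fun setT g -> measurable_fun setT h ->
  (forall x, `|g x| <= 1) -> (forall x, `|h x| <= 1) ->
  (\int[mu]_x (t * g x + s * h x)%:E =
    t%:E * \int[mu]_x (g x)%:E + s%:E * \int[mu]_x (h x)%:E)%E.
Proof.
move=> mg mh hg hh.
have ig : mu.-integrable setT (EFin \o g) := int_bd mg hg.
have ih : mu.-integrable setT (EFin \o h) := int_bd mh hh.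
have itg : mu.-integrable setT (EFin \o (fun x => t * g x)).
  apply: (int_bd (c := `|t|)); first by apply: measurable_funM => //; exact: measurable_cst.
  by move=> x; rewrite normrM ler_piMr.
have ish : mu.-integrable setT (EFin \o (fun x => s * h x)).
  apply: (int_bd (c := `|s|)); first by apply: measurable_funM => //; exact: measurable_cst.
  by move=> x; rewrite normrM ler_piMr.
rewrite (_ : (fun x => (t * g x + s * h x)%:E) =
  (EFin \o (fun x => t * g x)) \+ (EFin \o (fun x => s * h x))); last first.
  by apply/funext => x.
rewrite integralD_EFin //.
congr (_ + _)%E.
  rewrite (_ : (EFin \o (fun x => t * g x)) = (fun x => t%:E * (EFin \o g) x)%E) //.
  by rewrite integralZl.
rewrite (_ : (EFin \o (fun x => s * h x)) = (fun x => s%:E * (EFin \o h) x)%E) //.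
by rewrite integralZl.
Qed.

End part5.

End P5.
Import P5.

Module P6.

Arguments int_fin {d T R mu} muT {f c}.
Arguments int_bd {d T R mu} muT {f c}.
Arguments int_est {d T R mu} muT {f g U c}.
Arguments int_lin {d T R mu} muT {g h t s}.
Arguments Q_meas {R S k f}.

Section part6.
Variables (R : realType) (S : pmetricType R).
Variables (nu : {charge set (borel_of S) -> \bar R}) (P N : set (borel_of S)).
Variable (nuPN : hahn_decomposition nu P N).
Variable (k : norm_kind).

Local Notation mp := (jordan_pos nuPN).
Local Notation mn := (jordan_neg nuPN).
Local Notation cv := (charge_variation nuPN).

Lemma mpT : (mp setT < +oo)%E.
Proof. by rewrite ltey_eq fin_num_measure. Qed.
Lemma mnT : (mn setT < +oo)%E.
Proof. by rewrite ltey_eq fin_num_measure. Qed.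

Definition phi (f : S -> R) : R := fine (signed_integral nuPN f).

Lemma Ip_fin {f} : Q k f -> (\int[mp]_x (f x)%:E)%E \is a fin_num.
Proof. by move=> Qf; apply: (int_fin mpT (Q_meas Qf) (Q_bound Qf)). Qed.
Lemma In_fin {f} : Q k f -> (\int[mn]_x (f x)%:E)%E \is a fin_num.
Proof. by move=> Qf; apply: (int_fin mnT (Q_meas Qf) (Q_bound Qf)). Qed.

Lemma phiE {f} : Q k f ->
  phi f = fine (\int[mp]_x (f x)%:E) - fine (\int[mn]_x (f x)%:E).
Proof. by move=> Qf; rewrite /phi /signed_integral fineB ?Ip_fin ?In_fin. Qed.

Lemma signedE f : Q k f -> signed_integral nuPN f = (phi f)%:E.
Proof.
move=> Qf; rewrite /phi fineK // /signed_integral.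
by rewrite fin_numB Ip_fin ?In_fin.
Qed.

Lemma fine_leE (x y : \bar R) : (x <= y)%E -> x \is a fin_num -> y \is a fin_num ->
  fine x <= fine y.
Proof. by move=> xy xf yf; apply: fine_le => //; rewrite inE. Qed.

Lemma fine_est (x1 x2 m1 m2 : \bar R) (r : R) : x1 \is a fin_num ->
  x2 \is a fin_num -> m1 \is a fin_num -> m2 \is a fin_num ->
  (x1 - x2 <= r%:E * m1 + 2%:E * m2)%E ->
  fine x1 - fine x2 <= r * fine m1 + 2 * fine m2.
Proof.
by move: x1 x2 m1 m2 => [a| |] // [b| |] // [c| |] // [e| |] //= _ _ _ _;
  rewrite -!EFinM -EFinD -EFinB lee_fin.
Qed.

Lemma est_phi g p (U : set (borel_of S)) r : Q k g -> Q k p -> measurable U ->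
  0 <= r -> (forall x, U x -> `|g x - p x| <= r) ->
  phi g <= phi p + r * (fine (mp setT) + fine (mn setT)) +
    2 * (fine (mp (~` U)) + fine (mn (~` U))).
Proof.
move=> Qg Qp mU r0 hU.
have h1 := int_est mpT mU (Q_meas Qg) (Q_meas Qp) (Q_bound Qg) (Q_bound Qp) r0 hU.
have hU' : forall x, U x -> `|p x - g x| <= r by move=> x Ux; rewrite distrC; apply: hU.
have h2 := int_est mnT mU (Q_meas Qp) (Q_meas Qg) (Q_bound Qp) (Q_bound Qg) r0 hU'.
have mCU : measurable (~` U) by exact: measurableC.
have f1 := fin_num_measure mp _ (measurableT).
have f2 := fin_num_measure mn _ (measurableT).
have f3 := fin_num_measure mp _ mCU.
have f4 := fin_num_measure mn _ mCU.
have e1 := fine_est _ _ _ _ _ (Ip_fin Qg) (Ip_fin Qp) f1 f3 h1.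
have e2 := fine_est _ _ _ _ _ (In_fin Qp) (In_fin Qg) f2 f4 h2.
rewrite (phiE Qg) (phiE Qp) /=.
lra.
Qed.

Lemma fine_aff (x1 y1 x2 y2 : \bar R) (t s : R) : x1 \is a fin_num ->
  y1 \is a fin_num -> x2 \is a fin_num -> y2 \is a fin_num ->
  fine ((t%:E * x1 + s%:E * y1) - (t%:E * x2 + s%:E * y2))%E =
  t * (fine x1 - fine x2) + s * (fine y1 - fine y2).
Proof.
move: x1 y1 x2 y2 => [a| |] // [b| |] // [c| |] // [e| |] //= _ _ _ _.
ring.
Qed.

Lemma phi_affine : affine R S k phi.
Proof.
move=> g h t Qg Qh t01.
rewrite (phiE Qg) (phiE Qh) /phi /signed_integral.
rewrite (int_lin mpT (Q_meas Qg) (Q_meas Qh) (Q_bound Qg) (Q_bound Qh)).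
rewrite (int_lin mnT (Q_meas Qg) (Q_meas Qh) (Q_bound Qg) (Q_bound Qh)).
exact: fine_aff (Ip_fin Qg) (Ip_fin Qh) (In_fin Qg) (In_fin Qh).
Qed.

End part6.

End P6.
Import P6.

Module P7.

Section part7.
Variables (R : realType) (S : pmetricType R).
Variables (nu : {charge set (borel_of S) -> \bar R}) (P N : set (borel_of S)).
Variable (nuPN : hahn_decomposition nu P N).

Local Notation mp := (jordan_pos nuPN).
Local Notation mn := (jordan_neg nuPN).
Local Notation cv := (charge_variation nuPN).

Definition Ucov (e : nat -> S) (r : R) (n : nat) : set (borel_of S) :=
  \bigcup_(i in `I_n) [set x : borel_of S | mdist (e i) x < r].

Lemma Ucov_meas e r n : measurable (Ucov e r n).
Proof.
apply: bigcup_measurable => i _.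
have := @mdist_meas R S (e i) measurableT _ (measurable_itv `]-oo, r[).
rewrite setTI.
rewrite (_ : _ @^-1` _ = [set x : borel_of S | mdist (e i) x < r]) //.
Qed.

Lemma cover : separable_charge nuPN -> exists e : nat -> S,
  forall r, 0 < r -> forall eta, 0 < eta -> exists n,
    fine (mp (~` Ucov e r n)) + fine (mn (~` Ucov e r n)) <= eta.
Proof.
move=> [S0 [mS0 [[D [cD [DS0 S0D]]] eqv]]].
have /pcard_surjP[e se] := cD.
exists e => r r0 eta eta0.
pose Un := Ucov e r.
pose Uinf := \bigcup_n Un n.
have mUn : forall n, measurable (Un n) by move=> n; apply: Ucov_meas.
have mUinf : measurable Uinf by apply: bigcupT_measurable.
have ndU : {homo Un : n m / (n <= m)%N >-> (n <= m)%O}.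
  move=> n m nm; apply/subsetPset => x [i /= ilt xi].
  by exists i => //=; apply: leq_trans nm.
have cvg := nondecreasing_cvg_mu (mu := cv) mUn mUinf ndU.
have S0U : S0 `<=` Uinf.
  move=> x S0x.
  have := S0D x S0x (ball x r) (@nbhsx_ballx R S x r r0).
  move=> [d [Dd]]; rewrite ballEmdist /= => xd.
  have [i _ ei] := se d Dd.
  exists i.+1 => //; exists i => //=.
  by rewrite metric_sym ei.
have cvT : cv Uinf = cv setT.
  apply/eqP; rewrite eq_le; apply/andP; split.
    by apply: le_measure => //; rewrite inE.
  have <- : cv S0 = cv setT by exact: eqv.
  by apply: le_measure => //; rewrite inE.
have cvfin : forall A, measurable A -> cv A \is a fin_num.
  by move=> A mA; rewrite fin_numD !fin_num_measure.
have cvg' : (fine \o (cv \o Un)) n @[n --> \oo] --> fine (cv Uinf).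
  have h0 : (cv \o Un) n @[n --> \oo] --> (fine (cv Uinf))%:E.
    by rewrite fineK ?cvfin.
  by have [_ h] := (fine_cvgP _ _).1 h0; exact: h.
have hn' : \forall n \near \oo,
    `|fine (cv Uinf) - (fine \o (cv \o Un)) n| < eta.
  exact: ((cvgrPdist_lt _ _).1 cvg' eta eta0).
have [n hn] := filter_ex hn'.
exists n.
have mC : measurable (~` Un n) by apply: measurableC.
rewrite -fineD ?fin_num_measure //.
have -> : (mp (~` Un n) + mn (~` Un n))%E = cv (~` Un n) by [].
rewrite -setTD measureD // ?setTI; last by rewrite ltey_eq cvfin.
rewrite fineB ?cvfin //.
have e1 : fine (cv Uinf) = fine (cv setT) by rewrite cvT.
move: hn => /=; rewrite e1 => hn.
apply: le_trans (ltW hn); exact: ler_norm.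
Qed.

End part7.

End P7.
Import P7.

Module P8.

Section part8.
Variables (R : realType) (S : pmetricType R).
Variables (nu : {charge set (borel_of S) -> \bar R}) (P N : set (borel_of S)).
Variable (nuPN : hahn_decomposition nu P N).
Variable (k : norm_kind).

Local Notation mp := (jordan_pos nuPN).
Local Notation mn := (jordan_neg nuPN).
Local Notation phi := (@P6.phi R S nu P N nuPN).

Lemma near_pts (H : set_system (S -> R)) (PH : ProperFilter H) (p : S -> R)
  (Hp : forall x, (fun g : S -> R => g x) @ H --> p x) (e : nat -> S) (r : R) :
  0 < r -> forall n, \forall g \near H, forall i, (i < n)%N -> `|p (e i) - g (e i)| < r.
Proof.
move=> r0; elim=> [|n IH].
  by apply: filterE => g i; rewrite ltn0.
have hn : \forall g \near H, `|p (e n) - g (e n)| < r.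
  exact: ((cvgrPdist_lt _ _).1 (Hp (e n)) r r0).
apply: filterS2 IH hn => g h1 h2 i; rewrite ltnS leq_eqVlt => /orP[/eqP->//|].
exact: h1.
Qed.

Lemma Q0 : Q k (fun _ : S => 0 : R).
Proof.
have r0 : forall x y : S, lratio (fun _ : S => 0 : R) x y = 0.
  by move=> x y; rewrite /lratio subrr normr0 mul0r.
case: k => /=; [split|split; [|split]] => *; rewrite ?r0 ?normr0 ?add0r ?ler01 //.
Qed.

Lemma phi0 : phi (fun _ => 0) = 0.
Proof.
rewrite /P6.phi /signed_integral.
by rewrite !integral0_eq ?sube0.
Qed.

Lemma phi_bound f : Q k f -> phi f <= fine (mp setT) + fine (mn setT).
Proof.
move=> Qf.
have := @est_phi R S nu P N nuPN k f (fun _ => 0) setT 1 Qf Q0 measurableT ler01.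
rewrite phi0 setCT !measure0 /= add0r mul1r addr0 mulr0 addr0; apply.
by move=> x _; rewrite subr0; apply: Q_bound Qf x.
Qed.

Lemma phi_usc : separable_charge nuPN -> usc R S k phi.
Proof.
move=> hsep H PH HQ p Hp c Hc.
have Qp : Q k p := @Q_closed R S H PH p Hp k HQ.
have [e he] := @P7.cover R S nu P N nuPN hsep.
apply/ler_addgt0Pr => eps eps0.
pose a := fine (mp setT) + fine (mn setT).
have a0 : 0 <= a.
  rewrite /a addr_ge0 // fine_ge0 // measure_ge0 //.
pose r := eps / (6 * (a + 1)).
have r0 : 0 < r by rewrite divr_gt0 // mulr_gt0 // ltr_wpDl.
have hr : r * (6 * (a + 1)) = eps by rewrite /r mulfVK // gt_eqF // mulr_gt0 // ltr_wpDl.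
have eta0 : 0 < eps / 4 by rewrite divr_gt0.
have [n hn] := he r r0 (eps / 4) eta0.
have h1 := @filterI _ H PH _ _ HQ (near_pts _ PH _ Hp e _ r0 n).
have h2 := @filterI _ H PH _ _ Hc h1.
have [g [cg [Qg hg]]] := @filter_ex _ H PH _ h2.
have hU : forall x, Ucov R S e r n x -> `|g x - p x| <= 3 * r.
  move=> x [i /= ilt xi].
  have l1 := Q_lip Qg x (e i); have l2 := Q_lip Qp (e i) x.
  have l3 := hg i ilt.
  rewrite metric_sym in l1.
  have t1 : `|g x - p x| <= `|g x - g (e i)| + `|g (e i) - p (e i)| + `|p (e i) - p x|.
    have -> : g x - p x = (g x - g (e i)) + (g (e i) - p (e i)) + (p (e i) - p x) by ring.
    apply: le_trans (ler_normD _ _) _; rewrite lerD2r; exact: ler_normD.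
  rewrite distrC in l3.
  lra.
have := @est_phi R S nu P N nuPN k g p (Ucov R S e r n) (3 * r) Qg Qp
  (Ucov_meas R S e r n) ltac:(by rewrite mulr_ge0 // ltW) hU.
rewrite -/a => hest.
have hra : 3 * r * a <= eps / 2 by nra.
lra.
Qed.

Theorem main_thm : separable_charge nuPN ->
  exists f : S -> R,
    extreme_point (unit_ball k) f /\ dual_norm nuPN k = signed_integral nuPN f.
Proof.
move=> hsep.
pose G0 : set (S -> R) := Q k.
have gG0 : good R S k G0.
  split => //.
  - by exists (fun _ => 0); exact: Q0.
  - move=> H PH HG f Hf; exact: (@Q_closed R S H PH f Hf k HG).
have gA := @argmax_good R S k G0 phi gG0 (phi_usc hsep)
  (@phi_affine R S nu P N nuPN k) (ex_intro _ _ phi_bound).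
have [f [[Qf fmax] ext]] := @extreme_exists R S k _ gA.
exists f; split => //.
rewrite (@signedE R S nu P N nuPN k f Qf).
apply/eqP; rewrite eq_le; apply/andP; split.
  apply: ge_ereal_sup => _ [g /unit_ballP Qg <-].
  by rewrite (@signedE R S nu P N nuPN k g Qg) lee_fin; apply: fmax.
apply: ereal_sup_ubound; exists f; first exact/unit_ballP.
by rewrite (@signedE R S nu P N nuPN k f Qf).
Qed.

End part8.

End P8.
Import P8.

Theorem proposition2p2 (R : realType) (S : pmetricType R)
    (nu : {charge set (borel_of S) -> \bar R}) (P N : set (borel_of S))
    (nuPN : hahn_decomposition nu P N) (k : norm_kind) :
  separable_charge nuPN ->
  exists f : S -> R,
    extreme_point (unit_ball k) f /\ dual_norm nuPN k = signed_integral nuPN f.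
Proof. exact: (@main_thm R S nu P N nuPN k). Qed.
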